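(* Let $\mathcal{H}$ be a separable complex Hilbert space with $\dim\mathcal{H}=\infty$, and let $A\in\mathcal{B}(\mathcal{H})$. Then there exist two orthonormal bases $(u_n)_{n\in\mathbb{N}}$ and $(v_n)_{n\in\mathbb{N}}$ of $\mathcal{H}$ such that, for every $N\in\mathbb{N}$, the $N\times N$ matrix $A_N$ with entries $(A_N)_{ij}=\langle v_i,Au_j\rangle$, $i,j\in\{1,\dots,N\}$, is singular.
   Context: $\mathcal{B}(\mathcal{H})$ denotes the space of bounded, everywhere defined linear operators on $\mathcal{H}$. The inner product $\langle\cdot,\cdot\rangle$ is antilinear in the first entry and linear in the second. *)

(* Defs.v *)
From Stdlib Require Import Reals.
Open Scope R_scope.

Record Cplx : Type := mkC { re : R ; im : R }.

Definition C0 : Cplx := mkC 0 0.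
Definition C1 : Cplx := mkC 1 0.
Definition Cadd (a b : Cplx) : Cplx := mkC (re a + re b) (im a + im b).
Definition Copp (a : Cplx) : Cplx := mkC (- re a) (- im a).
Definition Cmul (a b : Cplx) : Cplx :=
  mkC (re a * re b - im a * im b) (re a * im b + im a * re b).
Definition Cconj (a : Cplx) : Cplx := mkC (re a) (- im a).

Fixpoint Csum (n : nat) (f : nat -> Cplx) : Cplx :=
  match n with
  | O => C0
  | S m => Cadd (Csum m f) (f m)
  end.

(* ---------- Complex Hilbert spaces ----------
   Inner product antilinear in the first entry, linear in the second. *)
Record HilbertSpace : Type := {
  carrier :> Type ;
  vadd : carrier -> carrier -> carrier ;
  vzero : carrier ;
  vopp : carrier -> carrier ;
  vscal : Cplx -> carrier -> carrier ;
  inner : carrier -> carrier -> Cplx ;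
  vadd_assoc : forall x y z, vadd x (vadd y z) = vadd (vadd x y) z ;
  vadd_comm : forall x y, vadd x y = vadd y x ;
  vadd_zero : forall x, vadd x vzero = x ;
  vadd_opp : forall x, vadd x (vopp x) = vzero ;
  vscal_one : forall x, vscal C1 x = x ;
  vscal_assoc : forall a b x, vscal a (vscal b x) = vscal (Cmul a b) x ;
  vscal_distr_v : forall a x y, vscal a (vadd x y) = vadd (vscal a x) (vscal a y) ;
  vscal_distr_c : forall a b x, vscal (Cadd a b) x = vadd (vscal a x) (vscal b x) ;
  inner_conj_sym : forall x y, inner y x = Cconj (inner x y) ;
  inner_add_r : forall x y z, inner x (vadd y z) = Cadd (inner x y) (inner x z) ;
  inner_scal_r : forall a x y, inner x (vscal a y) = Cmul a (inner x y) ;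
  inner_pos : forall x, 0 <= re (inner x x) ;
  inner_definite : forall x, inner x x = C0 -> x = vzero ;
  complete : forall f : nat -> carrier,
    (forall eps, 0 < eps -> exists N, forall m n, (N <= m)%nat -> (N <= n)%nat ->
        sqrt (re (inner (vadd (f m) (vopp (f n))) (vadd (f m) (vopp (f n))))) < eps) ->
    exists l, forall eps, 0 < eps -> exists N, forall n, (N <= n)%nat ->
        sqrt (re (inner (vadd (f n) (vopp l)) (vadd (f n) (vopp l)))) < eps
}.

Arguments vadd {h}. Arguments vzero {h}. Arguments vopp {h}.
Arguments vscal {h}. Arguments inner {h}.

Definition hnorm {H : HilbertSpace} (x : H) : R := sqrt (re (inner x x)).
Definition vsub {H : HilbertSpace} (x y : H) : H := vadd x (vopp y).

Fixpoint vlincomb {H : HilbertSpace} (n : nat) (c : nat -> Cplx) (f : nat -> H) : H :=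
  match n with
  | O => vzero
  | S m => vadd (vlincomb m c f) (vscal (c m) (f m))
  end.

Definition separable (H : HilbertSpace) : Prop :=
  exists d : nat -> H, forall (x : H) (eps : R), 0 < eps ->
    exists n, hnorm (vsub x (d n)) < eps.

Definition infinite_dimensional (H : HilbertSpace) : Prop :=
  forall (n : nat) (f : nat -> H), exists x : H,
    forall c : nat -> Cplx, x <> vlincomb n c f.

Definition bounded_operator {H : HilbertSpace} (A : H -> H) : Prop :=
  (forall x y, A (vadd x y) = vadd (A x) (A y)) /\
  (forall a x, A (vscal a x) = vscal a (A x)) /\
  (exists M : R, forall x, hnorm (A x) <= M * hnorm x).

Definition orthonormal_basis {H : HilbertSpace} (u : nat -> H) : Prop :=
  (forall i j, inner (u i) (u j) = if Nat.eqb i j then C1 else C0) /\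
  (forall x : H, (forall n, inner (u n) x = C0) -> x = vzero).

(* square matrices of size N: entries M i j for i, j < N (0-based) *)
Definition matmul (N : nat) (M P : nat -> nat -> Cplx) : nat -> nat -> Cplx :=
  fun i j => Csum N (fun k => Cmul (M i k) (P k j)).

Definition invertible_mx (N : nat) (M : nat -> nat -> Cplx) : Prop :=
  exists P : nat -> nat -> Cplx, forall i j, (i < N)%nat -> (j < N)%nat ->
    matmul N M P i j = (if Nat.eqb i j then C1 else C0) /\
    matmul N P M i j = (if Nat.eqb i j then C1 else C0).

Definition singular_mx (N : nat) (M : nat -> nat -> Cplx) : Prop :=
  ~ invertible_mx N M.

(* the truncated matrix (A_N)_{ij} = <v_i, A u_j> (0-based indices) *)
Definition compression {H : HilbertSpace} (A : H -> H) (u v : nat -> H) :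
  nat -> nat -> Cplx := fun i j => inner (v i) (A (u j)).

(* Main.v *)
Require Import Defs.
From Stdlib Require Import Reals Lra Lia Classical ClassicalEpsilon PeanoNat.
Open Scope R_scope.
Require Import Defs.

Lemma Ceq (a b : Cplx) : re a = re b -> im a = im b -> a = b.
Proof. destruct a, b; simpl; intros; subst; reflexivity. Qed.

Lemma inner_zero_r {H : HilbertSpace} (x : H) : inner x vzero = C0.
Proof.
  assert (E : inner x (@vzero H) = Cadd (inner x vzero) (inner x vzero)).
  { rewrite <- inner_add_r, vadd_zero. reflexivity. }
  apply Ceq; [apply (f_equal re) in E | apply (f_equal im) in E]; simpl in *; lra.
Qed.

Lemma inner_opp_r {H : HilbertSpace} (x y : H) : inner x (vopp y) = Copp (inner x y).
Proof.
  assert (E : Cadd (inner x y) (inner x (vopp y)) = C0).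
  { rewrite <- inner_add_r, vadd_opp. apply inner_zero_r. }
  apply Ceq; [apply (f_equal re) in E | apply (f_equal im) in E]; simpl in *; lra.
Qed.

Lemma inner_add_l {H : HilbertSpace} (x y z : H) :
  inner (vadd x y) z = Cadd (inner x z) (inner y z).
Proof.
  rewrite (inner_conj_sym _ z (vadd x y)), inner_add_r.
  rewrite (inner_conj_sym _ z x), (inner_conj_sym _ z y).
  apply Ceq; simpl; lra.
Qed.

Lemma inner_opp_l {H : HilbertSpace} (x z : H) :
  inner (vopp x) z = Copp (inner x z).
Proof.
  rewrite (inner_conj_sym _ z (vopp x)), inner_opp_r.
  rewrite (inner_conj_sym _ z x).
  apply Ceq; simpl; lra.
Qed.

Lemma inner_scal_l {H : HilbertSpace} a (x z : H) :
  inner (vscal a x) z = Cmul (Cconj a) (inner x z).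
Proof.
  rewrite (inner_conj_sym _ z (vscal a x)), inner_scal_r.
  rewrite (inner_conj_sym _ z x).
  apply Ceq; simpl; ring.
Qed.

Lemma inner_self_im {H : HilbertSpace} (x : H) : im (inner x x) = 0.
Proof.
  pose proof (inner_conj_sym _ x x) as E. apply (f_equal im) in E. simpl in E. lra.
Qed.

Lemma vscal_C0 {H : HilbertSpace} (x : H) : vscal C0 x = vzero.
Proof.
  set (y := vscal C0 x).
  assert (E : y = vadd y y).
  { unfold y. rewrite <- vscal_distr_c. f_equal. apply Ceq; simpl; lra. }
  transitivity (vadd (vadd y y) (vopp y)).
  - rewrite <- vadd_assoc, vadd_opp, vadd_zero. reflexivity.
  - rewrite <- E. apply vadd_opp.
Qed.

Lemma vadd_zero_l {H : HilbertSpace} (x : H) : vadd vzero x = x.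
Proof. rewrite vadd_comm; apply vadd_zero. Qed.

Lemma orth_zero {H : HilbertSpace} (x y : H) : inner x y = C0 -> inner y x = C0.
Proof. intro E. rewrite inner_conj_sym, E. apply Ceq; simpl; lra. Qed.

Lemma Csum_ext n f g : (forall k, (k < n)%nat -> f k = g k) -> Csum n f = Csum n g.
Proof.
  induction n; intros E; simpl; auto.
  rewrite IHn, E; auto; intros; apply E; lia.
Qed.

Lemma Csum_zero n f : (forall k, (k < n)%nat -> f k = C0) -> Csum n f = C0.
Proof.
  induction n; intros E; simpl; auto.
  rewrite IHn, E; try lia. apply Ceq; simpl; lra. intros; apply E; lia.
Qed.

Lemma Csum_delta n i (a : nat -> Cplx) :
  Csum n (fun k => Cmul (a k) (if Nat.eqb i k then C1 else C0)) =
  if Nat.ltb i n then a i else C0.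
Proof.
  induction n; simpl; auto.
  rewrite IHn. destruct (Nat.eqb_spec i n) as [->|Hn].
  - rewrite (proj2 (Nat.ltb_ge n n)) by lia. rewrite (proj2 (Nat.ltb_lt n (S n))) by lia.
    apply Ceq; simpl; ring.
  - destruct (Nat.ltb_spec i n); destruct (Nat.ltb_spec i (S n)); try lia;
    apply Ceq; simpl; ring.
Qed.

Lemma inner_lincomb {H : HilbertSpace} (x : H) n c f :
  inner x (vlincomb n c f) = Csum n (fun k => Cmul (c k) (inner x (f k))).
Proof.
  induction n; simpl. apply inner_zero_r.
  rewrite inner_add_r, inner_scal_r, IHn. reflexivity.
Qed.

Lemma vlincomb_ext {H : HilbertSpace} n c c' (f f' : nat -> H) :
  (forall k, (k < n)%nat -> c k = c' k /\ f k = f' k) ->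
  vlincomb n c f = vlincomb n c' f'.
Proof.
  induction n; intros E; simpl; auto.
  destruct (E n) as [-> ->]; [lia|]. rewrite IHn; [reflexivity|]. intros; apply E; lia.
Qed.

Lemma orth_lincomb {H : HilbertSpace} (y : H) m c e :
  (forall k, (k < m)%nat -> inner (e k) y = C0) -> inner (vlincomb m c e) y = C0.
Proof.
  intros E. apply orth_zero. rewrite inner_lincomb. apply Csum_zero.
  intros k Hk. rewrite (orth_zero _ _ (E k Hk)). apply Ceq; simpl; ring.
Qed.

Definition ON {H : HilbertSpace} m (e : nat -> H) := forall i j, (i < m)%nat -> (j < m)%nat ->
  inner (e i) (e j) = if Nat.eqb i j then C1 else C0.
Definition proj {H : HilbertSpace} m (e : nat -> H) (t : H) :=
  vlincomb m (fun j => inner (e j) t) e.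

Lemma resid_orth {H : HilbertSpace} m (e : nat -> H) t i :
  ON m e -> (i < m)%nat -> inner (e i) (vsub t (proj m e t)) = C0.
Proof.
  intros Hon Hi. unfold vsub, proj. rewrite inner_add_r, inner_opp_r, inner_lincomb.
  rewrite (Csum_ext _ _ (fun k => Cmul (inner (e k) t) (if Nat.eqb i k then C1 else C0)))
    by (intros; rewrite Hon; auto).
  rewrite Csum_delta, (proj2 (Nat.ltb_lt _ _)) by lia. apply Ceq; simpl; ring.
Qed.

Lemma resid_decomp {H : HilbertSpace} (t p : H) : t = vadd p (vsub t p).
Proof. unfold vsub. rewrite (vadd_comm _ t), vadd_assoc, vadd_opp, vadd_zero_l. reflexivity. Qed.

Lemma normalize {H : HilbertSpace} (r : H) : r <> vzero ->
  exists s a, inner s s = C1 /\ r = vscal a s /\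
    (forall y, inner y r = C0 -> inner y s = C0).
Proof.
  intros Hr. set (q := re (inner r r)).
  assert (Hrr : inner r r = mkC q 0) by (apply Ceq; simpl; [reflexivity | apply inner_self_im]).
  assert (Hq : 0 < q).
  { destruct (inner_pos _ r) as [h|h]; [exact h|]. exfalso; apply Hr.
    apply inner_definite. rewrite Hrr. apply Ceq; simpl; unfold q in *; lra. }
  set (sq := sqrt q).
  assert (Hs : sq * sq = q) by (apply sqrt_sqrt; lra).
  assert (Hsp : 0 < sq) by (apply sqrt_lt_R0; lra).
  exists (vscal (mkC (/ sq) 0) r), (mkC sq 0). split; [|split].
  - rewrite inner_scal_l, inner_scal_r, Hrr. apply Ceq; simpl; [|ring].
    rewrite <- Hs. field. lra.
  - rewrite vscal_assoc. replace (Cmul (mkC sq 0) (mkC (/ sq) 0)) with C1.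
    + symmetry; apply vscal_one.
    + apply Ceq; simpl; [field; lra | ring].
  - intros y Hy. rewrite inner_scal_r, Hy. apply Ceq; simpl; ring.
Qed.

Lemma gram_schmidt {H : HilbertSpace} n (w : nat -> H) :
  exists m (e : nat -> H), ON m e /\
    forall j, (j < n)%nat -> exists c, w j = vlincomb m c e.
Proof.
  induction n.
  - exists O, (fun _ => vzero). split; [intros i j Hi; lia | intros j Hj; lia].
  - destruct IHn as (m & e & Hon & Hrep).
    set (r := vsub (w n) (proj m e (w n))).
    destruct (classic (r = vzero)) as [Hr0|Hr0].
    + exists m, e. split; auto. intros j Hj.
      destruct (Nat.eq_dec j n) as [->|Hjn]; [|apply Hrep; lia].
      exists (fun j => inner (e j) (w n)).
      etransitivity; [apply (resid_decomp (w n) (proj m e (w n)))|]. fold r. rewrite Hr0, vadd_zero.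
      reflexivity.
    + destruct (normalize r Hr0) as (s & a & Hs1 & Hrs & Hso).
      assert (Hes : forall k, (k < m)%nat -> inner (e k) s = C0).
      { intros k Hk. apply Hso. apply resid_orth; auto. }
      exists (S m), (fun j => if Nat.eqb j m then s else e j). split.
      * intros i j Hi Hj.
        destruct (Nat.eqb_spec i m) as [->|Him]; destruct (Nat.eqb_spec j m) as [->|Hjm].
        -- rewrite Nat.eqb_refl. exact Hs1.
        -- rewrite (proj2 (Nat.eqb_neq m j)) by lia. apply orth_zero, Hes. lia.
        -- rewrite (proj2 (Nat.eqb_neq i m)) by lia. apply Hes. lia.
        -- apply Hon; lia.
      * intros j Hj.
        destruct (Nat.eq_dec j n) as [->|Hjn].
        -- exists (fun k => if Nat.eqb k m then a else inner (e k) (w n)).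
           etransitivity; [apply (resid_decomp (w n) (proj m e (w n)))|]. fold r. rewrite Hrs.
           simpl. rewrite Nat.eqb_refl. f_equal. unfold proj. apply vlincomb_ext.
           intros k Hk. rewrite (proj2 (Nat.eqb_neq k m)) by lia. auto.
        -- destruct (Hrep j ltac:(lia)) as [c Hc].
           exists (fun k => if Nat.eqb k m then C0 else c k).
           rewrite Hc. simpl. rewrite Nat.eqb_refl, vscal_C0, vadd_zero.
           apply vlincomb_ext. intros k Hk. rewrite (proj2 (Nat.eqb_neq k m)) by lia. auto.
Qed.

Lemma exists_orth {H : HilbertSpace} (Hinf : infinite_dimensional H) n (w : nat -> H) :
  exists x, inner x x = C1 /\ forall j, (j < n)%nat -> inner (w j) x = C0.
Proof.
  destruct (gram_schmidt n w) as (m & e & Hon & Hrep).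
  destruct (Hinf m e) as [x Hx].
  set (r := vsub x (proj m e x)).
  assert (Hr0 : r <> vzero).
  { intro E. apply (Hx (fun j => inner (e j) x)).
    etransitivity; [apply (resid_decomp x (proj m e x))|]. fold r. rewrite E, vadd_zero. reflexivity. }
  destruct (normalize r Hr0) as (s & a & Hs1 & Hrs & Hso).
  exists s. split; auto. intros j Hj. destruct (Hrep j Hj) as [c ->].
  apply orth_lincomb. intros k Hk. apply Hso. apply resid_orth; auto.
Qed.

Definition spec {H : HilbertSpace} (d : nat -> H) (cnt : nat -> nat) (g : nat -> nat -> H)
  (f : nat -> H) (k : nat) (x : H) : Prop :=
  inner x x = C1 /\ (forall j, (j < k)%nat -> inner (f j) x = C0) /\
  (if Nat.even k then forall j, (j < cnt k)%nat -> inner (g k j) x = C0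
   else exists c a, d (Nat.div2 k) = vadd (vlincomb k c f) (vscal a x)).

Lemma spec_exists {H : HilbertSpace} (Hinf : infinite_dimensional H) d cnt g
  (f : nat -> H) k : ON k f -> exists x, spec d cnt g f k x.
Proof.
  intros Hon. unfold spec. destruct (Nat.even k) eqn:Ek.
  - destruct (exists_orth Hinf (k + cnt k)
      (fun j => if Nat.ltb j k then f j else g k (j - k)%nat)) as [x [Hx1 Hx]].
    exists x; split; [auto|split].
    + intros j Hj; specialize (Hx j ltac:(lia)).
      rewrite (proj2 (Nat.ltb_lt _ _) Hj) in Hx; auto.
    + intros j Hj; specialize (Hx (k + j)%nat ltac:(lia)).
      rewrite (proj2 (Nat.ltb_ge _ _)) in Hx by lia.
      replace (k + j - k)%nat with j in Hx by lia. auto.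
  - set (t := d (Nat.div2 k)). set (r := vsub t (proj k f t)).
    destruct (classic (r = vzero)) as [E|E].
    + destruct (exists_orth Hinf k f) as [x [Hx1 Hx]].
      exists x. split; [auto|split; auto].
      exists (fun j => inner (f j) t), C0. rewrite vscal_C0, vadd_zero.
      etransitivity; [apply (resid_decomp t (proj k f t))|]. fold r.
      rewrite E, vadd_zero. reflexivity.
    + destruct (normalize r E) as (s & a & Hs1 & Hrs & Hso).
      exists s. split; [auto|split].
      * intros j Hj; apply Hso, resid_orth; auto.
      * exists (fun j => inner (f j) t), a. rewrite <- Hrs. apply resid_decomp.
Qed.

Definition step {H : HilbertSpace} d cnt g (f : nat -> H) k : H :=
  epsilon (inhabits vzero) (spec d cnt g f k).

Fixpoint Fs {H : HilbertSpace} d cnt g (k : nat) : nat -> H :=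
  match k with
  | O => fun _ => vzero
  | S k' => fun j => if Nat.eqb j k' then step d cnt g (Fs d cnt g k') k' else Fs d cnt g k' j
  end.

Definition vs {H : HilbertSpace} d cnt g (k : nat) : H := Fs d cnt g (S k) k.

Lemma Fs_v {H : HilbertSpace} (d : nat -> H) cnt g k j : (j < k)%nat -> Fs d cnt g k j = vs d cnt g j.
Proof.
  induction k; intros Hj; [lia|]. simpl.
  destruct (Nat.eqb_spec j k) as [->|Hjk].
  - unfold vs. simpl. rewrite Nat.eqb_refl. reflexivity.
  - apply IHk. lia.
Qed.

Lemma spec_of {H : HilbertSpace} (Hinf : infinite_dimensional H) (d : nat -> H) cnt g k :
  ON k (vs d cnt g) -> spec d cnt g (Fs d cnt g k) k (vs d cnt g k).
Proof.
  intros Hon. unfold vs. simpl. rewrite Nat.eqb_refl. unfold step.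
  apply epsilon_spec. apply spec_exists; auto.
  intros i j Hi Hj. rewrite !Fs_v by lia. apply Hon; auto.
Qed.

Lemma ON_all {H : HilbertSpace} (Hinf : infinite_dimensional H) (d : nat -> H) cnt g k :
  ON k (vs d cnt g).
Proof.
  induction k.
  - intros i j Hi; lia.
  - destruct (spec_of Hinf d cnt g k IHk) as (H1 & H2 & _).
    intros i j Hi Hj.
    destruct (Nat.eq_dec i k) as [->|Hik]; destruct (Nat.eq_dec j k) as [->|Hjk].
    + rewrite Nat.eqb_refl. exact H1.
    + rewrite (proj2 (Nat.eqb_neq k j)) by lia. apply orth_zero.
      rewrite <- (Fs_v d cnt g k j) by lia. apply H2; lia.
    + rewrite (proj2 (Nat.eqb_neq i k)) by lia.
      rewrite <- (Fs_v d cnt g k i) by lia. apply H2; lia.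
    + apply IHk; lia.
Qed.

Lemma pos_norm {H : HilbertSpace} (x : H) : x <> vzero -> 0 < re (inner x x).
Proof.
  intros Hx. destruct (inner_pos _ x) as [h|h]; [exact h|]. exfalso; apply Hx.
  apply inner_definite. apply Ceq; simpl; [lra | apply inner_self_im].
Qed.

Lemma build {H : HilbertSpace} (Hsep : separable H) (Hinf : infinite_dimensional H)
  (cnt : nat -> nat) (g : nat -> nat -> H) :
  exists v : nat -> H, orthonormal_basis v /\
    forall k j, Nat.even k = true -> (j < cnt k)%nat -> inner (g k j) (v k) = C0.
Proof.
  destruct Hsep as [d Hd].
  exists (vs d cnt g). split; [split|].
  - intros i j. apply (ON_all Hinf d cnt g (S (max i j))); lia.
  - intros x Hx.
    assert (Hxd : forall i, inner x (d i) = C0).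
    { intros i. set (k := (2 * i + 1)%nat).
      destruct (spec_of Hinf d cnt g k (ON_all Hinf d cnt g k)) as (_ & _ & H3).
      unfold k in H3 at 1. rewrite Nat.even_odd in H3.
      destruct H3 as (c & a & Hda). unfold k in Hda at 1. rewrite Nat.div2_odd' in Hda.
      rewrite Hda, inner_add_r, inner_scal_r, (orth_zero _ _ (Hx k)), inner_lincomb.
      rewrite Csum_zero. apply Ceq; simpl; ring.
      intros j Hj. rewrite Fs_v by lia. rewrite (orth_zero _ _ (Hx j)). apply Ceq; simpl; ring. }
    destruct (classic (x = vzero)) as [E|E]; auto. exfalso.
    pose proof (pos_norm x E) as Hq.
    destruct (Hd x (sqrt (re (inner x x))) ltac:(apply sqrt_lt_R0; lra)) as [n Hn].
    unfold hnorm, vsub in Hn.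
    rewrite inner_add_l, !inner_add_r, inner_opp_l, !inner_opp_r, (Hxd n),
      (orth_zero _ _ (Hxd n)) in Hn.
    rewrite ?inner_opp_l, ?inner_opp_r in Hn. simpl in Hn.
    pose proof (inner_pos _ (d n)).
    match type of Hn with sqrt ?a < _ => assert (Hle : re (inner x x) <= a) by lra end.
    apply sqrt_le_1_alt in Hle. lra.
  - intros k j Ek Hj.
    destruct (spec_of Hinf d cnt g k (ON_all Hinf d cnt g k)) as (_ & _ & H3).
    rewrite Ek in H3. apply H3; auto.
Qed.

Theorem lemma2p1 (H : HilbertSpace) (Hsep : separable H)
  (Hinf : infinite_dimensional H) (A : H -> H) (HA : bounded_operator A) :
  exists u v : nat -> H, orthonormal_basis u /\ orthonormal_basis v /\
    forall N : nat, (1 <= N)%nat -> singular_mx N (compression A u v).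
Proof.
  destruct (build Hsep Hinf (fun _ => O) (fun _ _ => vzero)) as [u [Hu _]].
  destruct (build Hsep Hinf (fun k => S (S k)) (fun k j => A (u j))) as [v [Hv Hc]].
  exists u, v. split; auto; split; auto.
  intros N HN [P HP].
  set (r := (2 * Nat.div2 (N - 1))%nat).
  assert (Hr : (r < N)%nat /\ (N <= S (S r))%nat).
  { pose proof (Nat.div2_odd (N - 1)). unfold r. destruct (Nat.odd (N - 1)); simpl in *; lia. }
  destruct (HP r r ltac:(lia) ltac:(lia)) as [E _].
  rewrite Nat.eqb_refl in E. unfold matmul in E. rewrite Csum_zero in E.
  - apply (f_equal re) in E. simpl in E. lra.
  - intros k Hk. unfold compression.
    rewrite (orth_zero _ _ (Hc r k (Nat.even_even _) ltac:(lia))). apply Ceq; simpl; ring.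
Qed.
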